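(* Let $n\geq 2$. For $x\in[0,1]$ let $X^{(x)}_n$ be a random variable taking values in $\{0,1,\ldots,n\}$ with $$P\left(X^{(x)}_n=k\right)=\binom{n}{k}\frac{x^{(k,c(x))}\,(1-x)^{(n-k,c(x))}}{1^{(n,c(x))}},\qquad c(x)=-\frac{\min\{x,1-x\}}{n-1},\quad k\in\{0,\ldots,n\}.$$ Then for all $0\leq x\leq y\leq 1$ we have $X^{(x)}_n\leq_{\mathrm{st}} X^{(y)}_n$.
   Context: For real $z$ and $h$, the rising factorial with increment $h$ is $z^{(0,h)}=1$ and $z^{(m,h)}=z(z+h)\cdots(z+(m-1)h)$ for integers $m\geq 1$. $X^{(x)}_n$ is the number of white balls drawn in $n$ draws from a Pólya urn initially containing $x$ white and $1-x$ black balls with replacement parameter $c(x)$. For random variables $X,Y$, $X\leq_{\mathrm{st}}Y$ (usual stochastic order) means that their distribution functions satisfy $F_X(t)\geq F_Y(t)$ for all $t\in\mathbb{R}$. *)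

(* Defs.v *)
From mathcomp Require Import all_boot all_order all_algebra.
Set Implicit Arguments. Unset Strict Implicit. Unset Printing Implicit Defensive.
Import Order.TTheory GRing.Theory Num.Theory.
Local Open Scope ring_scope.

(* rising factorial with increment h: z^(m,h) = z (z+h) ... (z+(m-1)h), z^(0,h) = 1 *)
Definition rfact {R : realFieldType} (z h : R) (m : nat) : R :=
  \prod_(i < m) (z + i%:R * h).

Definition cpar {R : realFieldType} (n : nat) (x : R) : R :=
  - Num.min x (1 - x) / (n.-1)%:R.

Definition polya_pmf {R : realFieldType} (n : nat) (x : R) (k : nat) : R :=
  'C(n, k)%:R * rfact x (cpar n x) k * rfact (1 - x) (cpar n x) (n - k)
  / rfact 1 (cpar n x) n.

Definition polya_cdf {R : realFieldType} (n : nat) (x : R) (t : R) : R :=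
  \sum_(k < n.+1 | (k%:R <= t)) polya_pmf n x k.

Definition st_le {R : realFieldType} (FX FY : R -> R) : Prop :=
  forall t : R, FY t <= FX t.

(* Main.v *)
Require Import Defs.
From mathcomp Require Import all_boot all_order all_algebra.
From mathcomp Require Import ring lra.
Import Order.TTheory GRing.Theory Num.Theory.
Set Implicit Arguments. Unset Strict Implicit.
Local Open Scope ring_scope.

Section S.
Variable R : realFieldType.
Implicit Types (x y z h : R).

Lemma rfact0 z h : rfact z h 0 = 1.
Proof. by rewrite /rfact big_ord0. Qed.

Lemma rfact_recl z h m : rfact z h m.+1 = z * rfact (z + h) h m.
Proof.
rewrite /rfact big_ord_recl /= mul0r addr0; congr (_ * _).
apply: eq_bigr => i _; rewrite /bump /= add1n mulrSr; ring.
Qed.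

Lemma vdm h n : forall x y,
  \sum_(k < n.+1) 'C(n, k)%:R * rfact x h k * rfact y h (n - k) = rfact (x + y) h n.
Proof.
elim: n => [|n IH] x y.
  by rewrite big_ord1 /= !rfact0 !mul1r.
rewrite rfact_recl mulrDl.
have -> : x + y + h = (x + h) + y by ring.
rewrite -{1}IH.
have -> : (x + h) + y = x + (y + h) by ring.
rewrite -IH !mulr_sumr.
have E1 : \sum_(i < n.+1) x * ('C(n, i)%:R * rfact (x + h) h i * rfact y h (n - i))
   = \sum_(i < n.+1) 'C(n, i)%:R * rfact x h i.+1 * rfact y h (n.+1 - i.+1).
  by apply: eq_bigr => i _; rewrite rfact_recl subSS; ring.
have E2 : \sum_(i < n.+1) y * ('C(n, i)%:R * rfact x h i * rfact (y + h) h (n - i))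
   = \sum_(i < n.+1) 'C(n, i)%:R * rfact x h i * rfact y h (n.+1 - i).
  apply: eq_bigr => i _; rewrite subSn; last by rewrite -ltnS.
  rewrite rfact_recl; ring.
rewrite E1 E2 big_ord_recl [X in _ = _ + X]big_ord_recl.
rewrite /= !bin0 !subn0.
under eq_bigr => i _ do rewrite binS natrD !mulrDl.
rewrite big_split /=.
rewrite [X in _ + (X + _) = _]big_ord_recr /= bin_small // !mul0r addr0.
have E3 : \sum_(i < n) 'C(n, (widen_ord (leqnSn n) i).+1)%:R * rfact x h (bump 0 (widen_ord (leqnSn n) i)) *
      rfact y h (n.+1 - bump 0 (widen_ord (leqnSn n) i)) =
   \sum_(i < n) 'C(n, bump 0 i)%:R * rfact x h (bump 0 i) * rfact y h (n.+1 - bump 0 i).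
  by apply: eq_bigr => i _; rewrite /bump /= add1n.
have E4 : \sum_(i < n.+1) 'C(n, i)%:R * rfact x h (bump 0 i) * rfact y h (n.+1 - bump 0 i)
   = \sum_(i < n.+1) 'C(n, i)%:R * rfact x h i.+1 * rfact y h (n.+1 - i.+1).
  by apply: eq_bigr => i _; rewrite /bump /= add1n.
rewrite E3 E4; ring.
Qed.

Lemma st_gen n (p q : nat -> R) (P : pred nat) :
  (forall j k, (j <= k)%N -> P k -> P j) ->
  \sum_(k < n.+1) p k = 1 -> \sum_(k < n.+1) q k = 1 ->
  (forall j k, (j < k)%N -> (k <= n)%N -> q j * p k <= p j * q k) ->
  \sum_(k < n.+1 | P k) q k <= \sum_(k < n.+1 | P k) p k.
Proof.
move=> Pdown Sp Sq Hml.
set Fp := \sum_(k < n.+1 | P k) p k; set Fq := \sum_(k < n.+1 | P k) q k.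
set Gp := \sum_(k < n.+1 | ~~ P k) p k; set Gq := \sum_(k < n.+1 | ~~ P k) q k.
have Hp : Fp + Gp = 1 by by rewrite -Sp (bigID (fun k : 'I_n.+1 => P k)) /=.
have Hq : Fq + Gq = 1 by by rewrite -Sq (bigID (fun k : 'I_n.+1 => P k)) /=.
have key : Fq * Gp <= Fp * Gq.
  rewrite /Fq /Fp !mulr_suml; apply: ler_sum => j Pj; rewrite !mulr_sumr.
  apply: ler_sum => k nPk; apply: Hml; last by rewrite -ltnS.
  rewrite ltnNge; apply/negP => hkj; by rewrite (Pdown _ _ hkj Pj) in nPk.
have e1 : Fq = Fq * (Fp + Gp) by rewrite Hp mulr1.
have e2 : Fp = Fp * (Fq + Gq) by rewrite Hq mulr1.
rewrite e1 [X in _ <= X]e2 !mulrDr; rewrite [Fq * Fp]mulrC; lra.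
Qed.

Lemma min_facts x : Num.min x (1 - x) <= x /\ Num.min x (1 - x) <= 1 - x /\ (Num.min x (1 - x) = x \/ Num.min x (1 - x) = 1 - x).
Proof.
case: (leP x (1 - x)) => h.
  split => //; split => //; by left.
split; first exact: ltW.
split => //; by right.
Qed.

Lemma cpar_e n x i z :
  z + i%:R * cpar n x = z - (i%:R / (n.-1)%:R) * Num.min x (1 - x).
Proof. by rewrite /cpar; ring. Qed.

Lemma t_bounds n i : (2 <= n)%N -> (i < n)%N ->
  0 <= i%:R / (n.-1)%:R :> R /\ i%:R / (n.-1)%:R <= 1 :> R.
Proof.
move=> hn hi.
have hN : 0 < (n.-1)%:R :> R by rewrite ltr0n; case: n hn hi => [|[|n]].
split; first by apply: divr_ge0; rewrite ?ler0n.
by rewrite ler_pdivrMr // mul1r ler_nat; case: n hn hi {hN}.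
Qed.

Lemma fac_mono n x y i : (2 <= n)%N -> 0 <= x -> x <= y -> y <= 1 -> (i < n)%N ->
  [/\ 0 <= x + i%:R * cpar n x, x + i%:R * cpar n x <= y + i%:R * cpar n y,
      0 <= 1 - y + i%:R * cpar n y & 1 - y + i%:R * cpar n y <= 1 - x + i%:R * cpar n x].
Proof.
move=> hn hx hxy hy hi.
rewrite !cpar_e; have [t0 t1] := t_bounds hn hi.
set t := (i%:R / (n.-1)%:R : R) in t0 t1 *.
have [mx1 [mx2 mx3]] := min_facts x; have [my1 [my2 my3]] := min_facts y.
set mx := Num.min x _ in mx1 mx2 mx3 *; set my := Num.min y _ in my1 my2 my3 *.
have d1 : my - mx <= y - x by case: mx3 => ->; lra.
have d2 : mx - my <= y - x by case: my3 => ->; lra.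
have mx0 : 0 <= mx by case: mx3 => ->; lra.
have my0 : 0 <= my by case: my3 => ->; lra.
have p1 : 0 <= (1 - t) * mx by apply: mulr_ge0; lra.
have p2 : 0 <= (1 - t) * my by apply: mulr_ge0; lra.
have p3 : 0 <= (1 - t) * (y - x) by apply: mulr_ge0; lra.
have p4 : 0 <= t * ((y - x) - (my - mx)) by apply: mulr_ge0; lra.
have p5 : 0 <= t * ((y - x) - (mx - my)) by apply: mulr_ge0; lra.
rewrite !mulrBl !mulrBr !mul1r in p1 p2 p3 p4 p5.
split; [lra|lra|lra|lra].
Qed.

Lemma den_pos n x i : (2 <= n)%N -> 0 <= x -> x <= 1 -> (i < n)%N ->
  0 < 1 + i%:R * cpar n x.
Proof.
move=> hn hx hx1 hi.
rewrite cpar_e; have [t0 t1] := t_bounds hn hi.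
set t := (i%:R / (n.-1)%:R : R) in t0 t1 *.
have [mx1 [mx2 mx3]] := min_facts x.
set mx := Num.min x _ in mx1 mx2 mx3 *.
have mx0 : 0 <= mx by case: mx3 => ->; lra.
have p1 : 0 <= (1 - t) * mx by apply: mulr_ge0; lra.
rewrite mulrBl mul1r in p1; lra.
Qed.


Lemma rfact_split z h a b : (a <= b)%N ->
  rfact z h b = rfact z h a * \prod_(a <= i < b) (z + i%:R * h).
Proof.
move=> hab; rewrite /rfact -!(big_mkord xpredT (fun i : nat => z + i%:R * h)) (big_cat_nat (leq0n a) hab) // big_mkord.
Qed.

Lemma prod_le (a b : nat) (F G : nat -> R) :
  (forall i, (a <= i)%N -> (i < b)%N -> 0 <= F i /\ F i <= G i) ->
  \prod_(a <= i < b) F i <= \prod_(a <= i < b) G i.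
Proof.
move=> H; rewrite big_nat_cond [X in _ <= X]big_nat_cond.
apply: ler_prod => i /andP[/andP[h1 h2] _]; have [-> ->] := H i h1 h2; done.
Qed.

Lemma prod_ge0' (a b : nat) (F : nat -> R) :
  (forall i, (a <= i)%N -> (i < b)%N -> 0 <= F i) -> 0 <= \prod_(a <= i < b) F i.
Proof.
move=> H; rewrite big_nat_cond.
apply: prodr_ge0 => i /andP[/andP[h1 h2] _]; exact: H.
Qed.

Lemma rfact_ge0 z h k : (forall i, (i < k)%N -> 0 <= z + i%:R * h) -> 0 <= rfact z h k.
Proof. move=> H; apply: prodr_ge0 => i _; exact: H. Qed.

Lemma D_pos n x : (2 <= n)%N -> 0 <= x -> x <= 1 -> 0 < rfact 1 (cpar n x) n.
Proof. move=> hn hx hx1; apply: prodr_gt0 => i _; exact: den_pos. Qed.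

Lemma pmf_sum n x : (2 <= n)%N -> 0 <= x -> x <= 1 ->
  \sum_(k < n.+1) polya_pmf n x k = 1.
Proof.
move=> hn hx hx1; rewrite /polya_pmf -mulr_suml vdm subrKC divff //.
by rewrite gt_eqF // D_pos.
Qed.

Lemma mlr n x y j k : (2 <= n)%N -> 0 <= x -> x <= y -> y <= 1 ->
  (j < k)%N -> (k <= n)%N ->
  polya_pmf n y j * polya_pmf n x k <= polya_pmf n x j * polya_pmf n y k.
Proof.
move=> hn hx hxy hy hjk hkn.
have hnk : (n - k <= n - j)%N by apply: leq_sub2l; exact: ltnW.
rewrite /polya_pmf.
set cx := cpar n x; set cy := cpar n y.
rewrite (@rfact_split x cx j k (ltnW hjk)) (@rfact_split y cy j k (ltnW hjk)).
rewrite (@rfact_split (1 - x) cx _ _ hnk) (@rfact_split (1 - y) cy _ _ hnk).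
set Ux := rfact x cx j; set Uy := rfact y cy j.
set Vx := rfact (1 - x) cx (n - k); set Vy := rfact (1 - y) cy (n - k).
set Zx := \prod_(j <= i < k) _; set Zy := \prod_(j <= i < k) _.
set Wy := \prod_(n - k <= i < n - j) _; set Wx := \prod_(n - k <= i < n - j) _.
set Dx := rfact 1 cx n; set Dy := rfact 1 cy n.
have fm := fun i (hi : (i < n)%N) => fac_mono hn hx hxy hy hi.
have fx := fun i (hi : (i < n)%N) => fac_mono hn hx (lexx x) (le_trans hxy hy) hi.
have fy := fun i (hi : (i < n)%N) => fac_mono hn (le_trans hx hxy) (lexx y) hy hi.
have Dx0 : 0 < Dx by apply: D_pos => //; exact: le_trans hy.
have Dy0 : 0 < Dy by apply: D_pos => //; exact: le_trans hxy.
have hUx : 0 <= Ux by apply: rfact_ge0 => i hi; have [] := fx i (leq_trans hi (leq_trans (ltnW hjk) hkn)).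
have hUy : 0 <= Uy by apply: rfact_ge0 => i hi; have [] := fy i (leq_trans hi (leq_trans (ltnW hjk) hkn)).
have hVx : 0 <= Vx.
  apply: rfact_ge0 => i hi; have [_ _ h _] := fx i (leq_trans hi (leq_subr _ _)).
  done.
have hVy : 0 <= Vy.
  apply: rfact_ge0 => i hi; have [_ _ h _] := fy i (leq_trans hi (leq_subr _ _)); done.
have hZ : 0 <= Zx /\ Zx <= Zy.
  split.
    by apply: prod_ge0' => i _ hi; have [] := fx i (leq_trans hi hkn).
  by apply: prod_le => i _ hi; have [] := fm i (leq_trans hi hkn); have [] := fx i (leq_trans hi hkn).
have hW : 0 <= Wy /\ Wy <= Wx.
  have hb : (n - j <= n)%N := leq_subr _ _.
  split.
    by apply: prod_ge0' => i _ hi; have [] := fy i (leq_trans hi hb).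
  by apply: prod_le => i _ hi; have [] := fm i (leq_trans hi hb); have [] := fy i (leq_trans hi hb).
set K := 'C(n, j)%:R * 'C(n, k)%:R * Ux * Uy * Vx * Vy / Dx / Dy.
have K0 : 0 <= K.
  rewrite /K; apply: divr_ge0; last exact: ltW.
  apply: divr_ge0; last exact: ltW.
  by rewrite !mulr_ge0 ?ler0n.
have key : K * (Wy * Zx) <= K * (Wx * Zy).
  apply: ler_wpM2l => //; case: hZ => ? ?; case: hW => ? ?.
  by apply: ler_pM.
have E1 : 'C(n, j)%:R * Uy * (Vy * Wy) / Dy * ('C(n, k)%:R * (Ux * Zx) * Vx / Dx)
   = K * (Wy * Zx) by rewrite /K; ring.
have E2 : 'C(n, j)%:R * Ux * (Vx * Wx) / Dx * ('C(n, k)%:R * (Uy * Zy) * Vy / Dy)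
   = K * (Wx * Zy) by rewrite /K; ring.
by rewrite E1 E2.
Qed.

End S.

Theorem theorem3p2 (R : realFieldType) (n : nat) (hn : (2 <= n)%N) (x y : R) :
  0 <= x -> x <= y -> y <= 1 ->
  st_le (polya_cdf n x) (polya_cdf n y).
Proof.
move=> hx hxy hy t; rewrite /polya_cdf.
apply: (@st_gen R n (polya_pmf n x) (polya_pmf n y) (fun k : nat => k%:R <= t)).
- by move=> j k hjk /= hk; apply: le_trans hk; rewrite ler_nat.
- by apply: pmf_sum => //; exact: le_trans hy.
- by apply: pmf_sum => //; exact: le_trans hxy.
- by move=> j k hjk hkn; apply: mlr.
Qed.
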